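(* Let $v=s_{\mathbf i}s_{\mathbf j}^*\in\mathrm{Cu}_2\setminus\{\lozenge\}$ and let $f\in\mathcal A$ have zero sums at $v$, i.e. $\sum_{l=0}^\infty f(s_{\mathbf i\mathbf n_l}s_{\mathbf j\mathbf n_l}^* )=0$ for every $\mathbf n\in\mathbf L$. Then $h:=\sum_{t\in S_v}f(t)\delta_t$ belongs to $\mathcal J$.
   Context: Let $\mathrm{Cu}_2$ be the involutive monoid with identity $e$ and zero element $\lozenge$ (so $\lozenge t=\lozenge=t\lozenge$ for all $t$), generated by $s_1,s_2,s_1^*,s_2^*$ subject to $s_1^*s_1=e=s_2^*s_2$ and $s_1^*s_2=\lozenge=s_2^*s_1$, with involution $t\mapsto t^*$ satisfying $(t^* )^*=t$, $(tu)^*=u^*t^*$. Let $\mathbf I_0=\{\emptyset\}$, $\mathbf I_n=\{1,2\}^n$, $\mathbf I=\bigcup_{n\ge0}\mathbf I_n$ (finite words; concatenation written $\mathbf{ij}$), and $\mathbf L=\{1,2\}^{\mathbb N}$; for $\mathbf n=(n_1,n_2,\dots)\in\mathbf L$ put $\mathbf n_0=\emptyset$, $\mathbf n_l=(n_1,\dots,n_l)$. For $\mathbf i=(i_1,\dots,i_k)\in\mathbf I$ put $s_{\mathbf i}=s_{i_1}\cdots s_{i_k}$ ($s_\emptyset=e$) and $s_{\mathbf i}^*=(s_{\mathbf i})^*$. Every $t\in\mathrm{Cu}_2\setminus\{\lozenge\}$ can be written uniquely as $t=s_{\mathbf i}s_{\mathbf j}^*$ with $\mathbf i,\mathbf j\in\mathbf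 I$. Let $\mathcal A=\ell^1(\mathrm{Cu}_2\setminus\{\lozenge\})$ with product $\#$ determined by bilinearity and continuity from $\delta_s\#\delta_t=\delta_{st}$ if $st\neq\lozenge$ and $\delta_s\#\delta_t=0$ if $st=\lozenge$; this is a unital Banach $*$-algebra with unit $\delta_e$ and isometric involution $f^*(s)=\overline{f(s^* )}$. Let $f_0=\delta_e-\delta_{s_1s_1^*}-\delta_{s_2s_2^*}$ and let $\mathcal J$ be the closed two-sided ideal of $\mathcal A$ generated by $f_0$. For $v=s_{\mathbf i}s_{\mathbf j}^*$, $S_v=\{s_{\mathbf{ik}}s_{\mathbf{jk}}^*:\mathbf k\in\mathbf I\}$ is the set of symmetric expansions of $v$. *)

(* Defs.v *)
From HB Require Import structures.
From mathcomp Require Import all_boot all_order all_algebra.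
From mathcomp Require Import finmap.
From mathcomp Require Import complex.
From mathcomp Require Import all_classical all_reals all_analysis.

Set Implicit Arguments.
Unset Strict Implicit.
Unset Printing Implicit Defensive.

Import Order.TTheory GRing.Theory Num.Theory.
Import numFieldTopology.Exports numFieldNormedType.Exports.

Local Open Scope classical_set_scope.
Local Open Scope ring_scope.

(* Letters {1,2} are encoded by bool: false = 1, true = 2.                    *)
(* A finite word i in I is a [seq bool]; an infinite word n in L is a          *)
(* function nat -> bool (n_1, n_2, ... = n 0, n 1, ...).                       *)
(* An element s_i s_j^* of Cu_2 \ {zero} is represented by the pair (i, j)   *)
(* (unique normal form, as stated in the paper).                              *)

Definition word := seq bool.
Definition elt := (word * word)%type.

Definition cu_e : elt := ([::], [::]).

(* product in Cu_2: (s_i s_j^* ) (s_k s_l^* ); None encodes the zero element. *)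
Definition cu_mul (a b : elt) : option elt :=
  let: (i, j) := a in let: (k, l) := b in
  if prefix j k then Some (i ++ drop (size j) k, l)
  else if prefix k j then Some (i, l ++ drop (size k) j)
  else None.

Definition trunc (n : nat -> bool) (l : nat) : word := mkseq n l.

Section Algebra.
Variable R : realType.
Local Notation C := R[i].

Definition cabs (z : C) : R := Normc.normc z.

Definition l1norm (f : elt -> C) : \bar R :=
  (\esum_(t in [set: elt]) (cabs (f t))%:E)%E.

(* membership in A = l^1(Cu_2 \ {zero}) *)
Definition inA (f : elt -> C) : Prop := (l1norm f < +oo)%E.

Definition delta (s : elt) : elt -> C := fun t => if t == s then 1 else 0.

(* unordered sums of families indexed by a choiceType: limit of the        *)
(* finite partial sums along the net of finite subsets                       *)
Definition totally {I : choiceType} : set_system {fset I} :=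
  filter_from setT (fun A => [set B | (A `<=` B)%fset]).

Definition partial_sum {I : choiceType} (x : I -> C) (A : {fset I}) : C :=
  \sum_(i : A) x (val i).

Definition usum {I : choiceType} (x : I -> C) : C :=
  lim ((fun A => (partial_sum x A : (R[i])^o)) @ totally).

Definition conv (f g : elt -> C) : elt -> C := fun u =>
  usum (fun p : elt * elt => if cu_mul p.1 p.2 == Some u then f p.1 * g p.2 else 0).

Definition f0 : elt -> C :=
  fun t => delta cu_e t - delta ([:: false], [:: false]) t
                        - delta ([:: true], [:: true]) t.

Definition subspaceA (I : set (elt -> C)) : Prop :=
  [/\ (forall g, I g -> inA g),
      I (fun _ => 0),
      (forall g h, I g -> I h -> I (fun t => g t + h t)) &
      (forall (c : C) g, I g -> I (fun t => c * g t))].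

Definition closedA (I : set (elt -> C)) : Prop :=
  forall g, inA g ->
    (forall e : R, 0 < e ->
       exists2 h, I h & (l1norm (fun t => (g t - h t)%R) < e%:E)%E) ->
    I g.

Definition closed_ideal (I : set (elt -> C)) : Prop :=
  [/\ subspaceA I,
      (forall a g, inA a -> I g -> I (conv a g)),
      (forall a g, inA a -> I g -> I (conv g a)) &
      closedA I].

Definition J : set (elt -> C) :=
  fun g => forall I, closed_ideal I -> I f0 -> I g.

Definition zero_sums_at (i j : word) (f : elt -> C) : Prop :=
  forall n : nat -> bool,
    series (fun l => (f (i ++ trunc n l, j ++ trunc n l) : (R[i])^o)) @ \oo --> (0 : (R[i])^o).

Definition restrict_Sv (i j : word) (f : elt -> C) : elt -> C := fun u =>
  if `[< exists k : word, u = (i ++ k, j ++ k) >] then f u else 0.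

End Algebra.

(* Main.v *)
Require Import Defs.
From HB Require Import structures.
From mathcomp Require Import all_boot all_order all_algebra.
From mathcomp Require Import finmap.
From mathcomp Require Import complex.
From mathcomp Require Import all_classical all_reals all_analysis.
Set Implicit Arguments.
Unset Strict Implicit.
Unset Printing Implicit Defensive.
Import Order.TTheory GRing.Theory Num.Theory.
Import numFieldTopology.Exports numFieldNormedType.Exports.
Local Open Scope classical_set_scope.
Local Open Scope ring_scope.
From mathcomp Require Import ring zify lra.
Lemma totally_proper (I : choiceType) : ProperFilter (@totally I).
Proof.
apply: filter_from_proper; last by move=> A _; exists A => /=; exact: fsubset_refl.
apply: filter_from_filter; first by exists fset0.
move=> A B _ _; exists (A `|` B)%fset => // C /= HC; split.
  by apply: fsubset_trans HC; apply: fsubsetUl.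
by apply: fsubset_trans HC; apply: fsubsetUr.
Qed.

Lemma sum_sub_supp (T : choiceType) (R : realType) (x : T -> R[i]) (s r : seq T) :
  uniq s -> uniq r -> {subset s <= r} -> (forall y, y \notin s -> x y = 0) ->
  \sum_(y <- r) x y = \sum_(y <- s) x y.
Proof.
move=> us ur sr xs.
rewrite (bigID (fun y => y \in s)) /= [X in _ + X]big1 ?addr0; last by move=> y /xs.
rewrite -big_filter -[RHS]big_filter; apply: perm_big.
apply: uniq_perm; rewrite ?filter_uniq // => y; rewrite !mem_filter.
by case Hy: (y \in s) => //=; rewrite sr.
Qed.

Lemma usum_fin (T : choiceType) (R : realType) (x : T -> R[i]) (s : seq T) :
  uniq s -> (forall y, y \notin s -> x y = 0) -> usum x = \sum_(y <- s) x y.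
Proof.
move=> us xs; rewrite /usum.
have PF := @totally_proper T.
apply: (@norm_cvg_lim _ _ _ _ (\sum_(y <- s) x y : (R[i])^o)).
apply: cvg_trans (cvg_cst (\sum_(y <- s) x y : (R[i])^o)).
apply: near_eq_cvg.
exists [fset y | y in s]%fset => // A /= sA.
rewrite /partial_sum -(big_seq_fsetE _ A xpredT x) /=.
  symmetry; apply: sum_sub_supp => //.
  by move=> y ys; apply: (fsubsetP sA); rewrite inE /= ys.
by case: PF.
Qed.

Lemma conv_deltaL (R : realType) (a : elt) (b : elt -> R[i]) (s : seq elt) u :
  uniq s -> (forall y, y \notin s -> b y = 0) ->
  Defs.conv (delta R a) b u = \sum_(q <- s) (if cu_mul a q == Some u then b q else 0).
Proof.
move=> us bs; rewrite /Defs.conv (@usum_fin _ _ _ [seq (a, q) | q <- s]).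
- rewrite big_map; apply: eq_bigr => q _ /=.
  by rewrite /delta eqxx mul1r.
- by rewrite map_inj_uniq // => q1 q2 [].
- move=> [p q] /=; rewrite /delta.
  case: (eqVneq p a) => [->|pa]; last by rewrite mul0r; case: ifP.
  move=> H; rewrite bs ?mul0r ?mulr0; [by case: ifP|]. by apply: contra H => H; apply/mapP; exists q.
Qed.

Lemma conv_deltaR (R : realType) (a : elt) (b : elt -> R[i]) (s : seq elt) u :
  uniq s -> (forall y, y \notin s -> b y = 0) ->
  Defs.conv b (delta R a) u = \sum_(p <- s) (if cu_mul p a == Some u then b p else 0).
Proof.
move=> us bs; rewrite /Defs.conv (@usum_fin _ _ _ [seq (p, a) | p <- s]).
- rewrite big_map; apply: eq_bigr => q _ /=.
  by rewrite /delta eqxx mulr1.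
- by rewrite map_inj_uniq // => q1 q2 [].
- move=> [p q] /=; rewrite /delta.
  case: (eqVneq q a) => [->|pa]; last by rewrite mulr0; case: ifP.
  move=> H; rewrite bs ?mul0r ?mulr0; [by case: ifP|]. by apply: contra H => H; apply/mapP; exists p.
Qed.

Lemma inner_eq (R : realType) (J0 : word) u :
  Defs.conv (f0 R) (delta R ([::], J0)) u =
  delta R ([::], J0) u - delta R ([:: false], J0 ++ [:: false]) u
     - delta R ([:: true], J0 ++ [:: true]) u.
Proof.
rewrite (@conv_deltaR _ _ _ [:: cu_e; ([:: false], [:: false]); ([:: true], [:: true])]) //.
- rewrite !big_cons big_nil /= /f0 /delta /cu_e /=.
  have E : forall x y : elt, (Some x == Some y) = (x == y).
    by move=> x y; apply/eqP/eqP => [[]|->].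
  rewrite !E !(eq_sym u).
  case: eqP => [E1|_]; try subst u; rewrite ?xpair_eqE /=; [ring|].
  case: eqP => [E1|_]; try subst u; rewrite ?xpair_eqE /=; [ring|].
  case: eqP => [E1|_]; try subst u; rewrite ?xpair_eqE /=; ring.
- move=> y; rewrite !inE /f0 /delta => /norP [/negbTE -> /norP [/negbTE -> /negbTE ->]].
  by rewrite subrr subr0.
Qed.

Lemma cat1_neq (s : word) b : (s ++ [:: b] == s) = false.
Proof. apply/eqP => /(congr1 size); rewrite size_cat /= addn1. lia. Qed.

Lemma cat1_eq (s : word) a b : (s ++ [:: a] == s ++ [:: b]) = (a == b).
Proof. rewrite eqseq_cat // eqxx /=. by case: a; case: b. Qed.

Lemma g_eq (R : realType) (I0 J0 : word) :
  Defs.conv (delta R (I0, [::])) (Defs.conv (f0 R) (delta R ([::], J0))) =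
  fun u => delta R (I0, J0) u - delta R (I0 ++ [:: false], J0 ++ [:: false]) u
     - delta R (I0 ++ [:: true], J0 ++ [:: true]) u.
Proof.
apply/funext => u.
rewrite (@conv_deltaL _ _ _ [:: ([::], J0); ([:: false], J0 ++ [:: false]); ([:: true], J0 ++ [:: true])]).
- rewrite !big_cons big_nil /= !inner_eq /delta !xpair_eqE /= !eqxx /=.
  rewrite cats0.
  have E : forall x y : elt, (Some x == Some y) = (x == y).
    by move=> x y; apply/eqP/eqP => [[]|->].
  rewrite !E !(eq_sym u).
  case: eqP => [E1|_]; try subst u; rewrite ?xpair_eqE /= ?cat1_neq ?cat1_eq /=; [ring|].
  case: eqP => [E1|_]; try subst u; rewrite ?xpair_eqE /= ?cat1_neq ?cat1_eq /=; [ring|].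
  case: eqP => [E1|_]; try subst u; rewrite ?xpair_eqE /= ?cat1_neq ?cat1_eq /=; ring.
- by [].
- move=> y; rewrite !inE inner_eq /delta => /norP [/negbTE -> /norP [/negbTE -> /negbTE ->]].
  by rewrite subrr subr0.
Qed.

Definition emb (i j m : word) : elt := (i ++ m, j ++ m).

Definition decode (i j : word) (u : elt) : option word :=
  if [&& prefix i u.1, prefix j u.2 & drop (size i) u.1 == drop (size j) u.2]
  then Some (drop (size i) u.1) else None.

Lemma emb_inj i j : injective (emb i j).
Proof. by move=> m1 m2 [] /eqP; rewrite eqseq_cat // eqxx => /eqP. Qed.

Lemma decode_emb i j m : decode i j (emb i j m) = Some m.
Proof. by rewrite /decode /= !prefix_prefix !drop_size_cat // eqxx. Qed.

Lemma decode_Some i j u m : decode i j u = Some m -> u = emb i j m.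
Proof.
rewrite /decode; case: u => a b /=.
case: (prefixP) => [[a' ->]|] //=; case: (prefixP) => [[b' ->]|] //=.
rewrite !drop_size_cat //; case: eqP => // -> [<-] //.
Qed.

Lemma decode_None i j u : decode i j u = None -> forall m, u <> emb i j m.
Proof. by move=> H m E; rewrite E decode_emb in H. Qed.

Fixpoint lev (n : nat) : seq word :=
  if n is n'.+1 then [seq false :: w | w <- lev n'] ++ [seq true :: w | w <- lev n']
  else [:: [::]].

Lemma mem_lev n m : (m \in lev n) = (size m == n).
Proof.
elim: n m => [|n IH] [|b m] //=; rewrite mem_cat.
  by apply/orP => -[] /mapP [].
have inj b' : injective (@cons bool b') by move=> x y [].
rewrite eqSS -IH; case: b.
  rewrite (mem_map (inj true)).
  by case: mapP => // -[].
rewrite (mem_map (inj false)).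
by case: mapP => [[]|]; rewrite ?orbF.
Qed.

Lemma uniq_lev n : uniq (lev n).
Proof.
have inj b' : injective (@cons bool b') by move=> x y [].
elim: n => //= n IH; rewrite cat_uniq !map_inj_uniq //= IH /=.
rewrite andbT; by apply/hasP => -[x /mapP [y _ ->] /mapP [z _]].
Qed.

Lemma sum_ind (R : realType) (T : eqType) (r : seq T) (G : T -> R[i]) x :
  uniq r -> \sum_(k <- r) G k * (if x == k then 1 else 0) = if x \in r then G x else 0.
Proof.
elim: r => [|a r IH] /=; first by rewrite big_nil.
move=> /andP [ar ur]; rewrite big_cons IH // inE.
case: eqP => [->|_] /=; last by rewrite mulr0 add0r.
by rewrite (negbTE ar) mulr1 addr0.
Qed.

Lemma ind_split (R : realType) (m k : word) N : size k = N ->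
  (if m == k ++ [:: false] then 1 else 0) + (if m == k ++ [:: true] then 1 else 0)
  = (if (size m == N.+1) && (take N m == k) then 1 else 0 : R[i]).
Proof.
move=> sk; case: (lastP m) => [|m' x]; first by rewrite /=; case: (k) => [|? ?]; rewrite /= ?addr0.
rewrite -!cats1 size_cat addn1 eqSS.
case: (eqVneq (size m') N) => [sm|sn] /=.
  rewrite !eqseq_cat ?sm ?sk // take_size_cat //.
  by case: eqP => _ /=; [case: x|]; rewrite /= ?addr0 ?add0r.
have E b : (m' ++ [:: x] == k ++ [:: b]) = false.
  by apply/eqP => /(congr1 size); rewrite !size_cat sk /= !addn1 => -[] /eqP; rewrite (negbTE sn).
by rewrite !E addr0.
Qed.

Definition Fw (R : realType) i j (f : elt -> R[i]) m := f (emb i j m).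
Definition cw (R : realType) i j (f : elt -> R[i]) m :=
  \sum_(k < (size m).+1) Fw i j f (take k m).
Definition gk (R : realType) i j k : elt -> R[i] := fun u =>
  delta R (emb i j k) u - delta R (emb i j (k ++ [:: false])) u
  - delta R (emb i j (k ++ [:: true])) u.
Fixpoint HN (R : realType) i j (f : elt -> R[i]) N : elt -> R[i] :=
  if N is N'.+1 then fun u => HN i j f N' u + \sum_(k <- lev N') cw i j f k * gk R i j k u
  else fun _ => 0.
Definition EN (R : realType) i j (f : elt -> R[i]) N u : R[i] :=
  match decode i j u with
  | Some m => if (size m < N)%N then 0 else if size m == N then cw i j f m else Fw i j f m
  | None => 0 end.

Lemma gk_emb (R : realType) i j k m :
  gk R i j k (emb i j m) = (if m == k then 1 else 0) -
     ((if m == k ++ [:: false] then 1 else 0) + (if m == k ++ [:: true] then 1 else 0)).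
Proof. by rewrite /gk /delta !(inj_eq (@emb_inj i j)) opprD addrA. Qed.

Lemma sumg (R : realType) i j (f : elt -> R[i]) m N :
  \sum_(k <- lev N) cw i j f k * gk R i j k (emb i j m) =
  (if size m == N then cw i j f m else 0) -
  (if size m == N.+1 then cw i j f (take N m) else 0).
Proof.
under eq_bigr => k _ do rewrite gk_emb mulrBr.
rewrite sumrB sum_ind ?uniq_lev // mem_lev; congr (_ - _).
case: (eqVneq (size m) N.+1) => [sm|sn].
  rewrite big_seq (eq_bigr (fun k => cw i j f k * (if take N m == k then 1 else 0))).
    by rewrite -big_seq sum_ind ?uniq_lev // mem_lev size_takel ?sm // eqxx.
  move=> k; rewrite mem_lev => /eqP sk; rewrite (ind_split _ _ sk) sm eqxx /=.
  by [].
rewrite big_seq big1 // => k; rewrite mem_lev => /eqP sk; rewrite (ind_split _ _ sk).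
by rewrite (negbTE sn) mulr0.
Qed.

Lemma restrict_dec (R : realType) i j (f : elt -> R[i]) u :
  restrict_Sv i j f u = match decode i j u with Some m => Fw i j f m | None => 0 end.
Proof.
rewrite /restrict_Sv; case E: (decode i j u) => [m|].
  rewrite (decode_Some E) asboolT //; by exists m.
rewrite asboolF // => -[k Hk]; exact: (decode_None E Hk).
Qed.

Lemma cw_last (R : realType) i j (f : elt -> R[i]) m N : size m = N.+1 ->
  cw i j f m = cw i j f (take N m) + Fw i j f m.
Proof.
move=> sm; rewrite /cw sm big_ord_recr /= size_takel ?sm // take_oversize ?sm //.
congr (_ + _); apply: eq_bigr => k _; rewrite take_takel //.
by have := ltn_ord k; rewrite ltnS.
Qed.

Lemma HN_none (R : realType) i j (f : elt -> R[i]) N u :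
  decode i j u = None -> HN i j f N u = 0.
Proof.
move=> E; elim: N => //= N ->; rewrite add0r big1 // => k _.
have D x : delta R (emb i j x) u = 0.
  by rewrite /delta; case: eqP => // /(decode_None E).
by rewrite /gk !D !subr0 mulr0.
Qed.

Lemma claimA (R : realType) i j (f : elt -> R[i]) N u :
  restrict_Sv i j f u - HN i j f N u = EN i j f N u.
Proof.
rewrite restrict_dec /EN; case E: (decode i j u) => [m|]; last first.
  by rewrite HN_none // subr0.
rewrite (decode_Some E); elim: N => [|N IH] /=.
  rewrite subr0; case: eqP => // /size0nil ->.
  by rewrite /cw /= big_ord_recl big_ord0 addr0.
rewrite sumg opprD addrA IH.
case: (ltngtP (size m) N) => H.
- have H1 : (size m < N.+1)%N by lia.
  have H2 : size m != N.+1 by lia.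
  by rewrite H1 (negbTE H2) !subr0.
- have H1 : ~~ (size m < N.+1)%N by lia.
  rewrite (negbTE H1).
  case: (eqVneq (size m) N.+1) => [sm|sn]; last by rewrite !subr0.
  by rewrite (cw_last _ _ _ sm) sub0r opprK addrC.
- rewrite H ltnSn (ltn_eqF (ltnSn N)) subr0; exact: subrr.
Qed.

Lemma cabsE (R : realType) (x : R[i]) : cabs x = complex.Re `|x|.
Proof. by case: x. Qed.

Lemma cabs_ge0 (R : realType) (x : R[i]) : 0 <= cabs x.
Proof. by have := normr_ge0 x; rewrite lecE cabsE => /andP [_]. Qed.

Lemma inA_delta (R : realType) s : inA (delta R s).
Proof.
rewrite /inA /l1norm (eq_esum (b := fun t => if t \in [set s]%classic then (1%:E : \bar R) else 0%:E)).
  by rewrite -esum_mkcond esum_set1 // ltry.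
move=> t _; rewrite /delta in_set1; case: (t == s); rewrite cabsE.
  by rewrite normr1.
by rewrite normr0.
Qed.

Lemma claimB (R : realType) i j (f : elt -> R[i]) N (I : set (elt -> R[i])) :
  closed_ideal I -> I (f0 R) -> I (HN i j f N).
Proof.
case=> -[_ I0 Iadd Iscal] IL IR _ If0.
have Ig k : I (gk R i j k).
  have -> : gk R i j k = Defs.conv (delta R (i ++ k, [::]))
                 (Defs.conv (f0 R) (delta R ([::], j ++ k))).
    by rewrite g_eq /gk /emb -!catA.
  by apply: IL; [exact: inA_delta|apply: IR => //; exact: inA_delta].
have Is s : I (fun u => \sum_(k <- s) cw i j f k * gk R i j k u).
  elim: s => [|a s IH].
    by rewrite (_ : (fun _ => _) = (fun _ => 0)) //; apply/funext => u; rewrite big_nil.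
  rewrite (_ : (fun _ => _) = (fun u => cw i j f a * gk R i j a u +
                  \sum_(k <- s) cw i j f k * gk R i j k u)).
    by apply: Iadd => //; apply: Iscal.
  by apply/funext => u; rewrite big_cons.
by elim: N => //= N IH; apply: Iadd.
Qed.

Local Open Scope complex_scope.
Local Open Scope ring_scope.

Lemma normE (R : realType) (x : R[i]) : `|x| = (cabs x)%:C.
Proof. by case: x. Qed.

Lemma cabs_le3 (R : realType) (x y z : R[i]) : `|x| <= `|y| + `|z| -> cabs x <= cabs y + cabs z.
Proof. by rewrite !normE -rmorphD lecR. Qed.

Lemma cabs_sum (R : realType) (T : Type) (r : seq T) (G : T -> R[i]) :
  cabs (\sum_(k <- r) G k) <= \sum_(k <- r) cabs (G k).
Proof.
have := ler_norm_sum r G xpredT; rewrite normE.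
have -> : \sum_(k <- r) `|G k| = (\sum_(k <- r) cabs (G k))%:C.
  by rewrite rmorph_sum; apply: eq_bigr => k _; rewrite normE.
by rewrite lecR.
Qed.

Lemma cabs0 (R : realType) : cabs (0 : R[i]) = 0.
Proof. by rewrite cabsE normr0. Qed.

Lemma trunc_le m k : (k <= size m)%N -> trunc (nth false m) k = take k m.
Proof. by move=> H; rewrite /trunc /mkseq map_nth_iota0. Qed.

Lemma trunc_ge m k : (size m <= k)%N ->
  trunc (nth false m) k = m ++ nseq (k - size m)%N false.
Proof.
move=> H; rewrite /trunc /mkseq -(subnKC H) iotaD map_cat map_nth_iota0 // take_size.
congr (_ ++ _); rewrite subnKC // add0n.
have : all (fun x => (size m <= x)%N) (iota (size m) (k - size m)%N).
  by apply/allP => x; rewrite mem_iota => /andP [].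
rewrite -{3}(size_iota (size m) (k - size m)%N).
elim: (iota _ _) => [|a s IH] //= /andP [a1 /IH ->].
by rewrite nth_default.
Qed.

Lemma sum_sub_le (R : realType) (T : eqType) (r r' : seq T) (F : T -> R) :
  uniq r -> uniq r' -> {subset r <= r'} -> (forall x, 0 <= F x) ->
  \sum_(x <- r) F x <= \sum_(x <- r') F x.
Proof.
move=> ur ur' sr F0; rewrite [X in _ <= X](bigID (fun x => x \in r)) /=.
rewrite -[X in X + _]big_filter.
have -> : \sum_(i0 <- [seq i0 <- r' | i0 \in r]) F i0 = \sum_(x <- r) F x.
  apply: perm_big; apply: uniq_perm; rewrite ?filter_uniq // => y.
  rewrite mem_filter; case Hy: (y \in r) => //=; exact: sr.
by rewrite lerDl sumr_ge0.
Qed.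

Lemma sum_le_l1 (R : realType) i j (f : elt -> R[i]) (s : seq word) : uniq s ->
  ((\sum_(m <- s) cabs (Fw i j f m))%:E <= l1norm f)%E.
Proof.
move=> us; rewrite /l1norm; apply: esum_ge.
exists [set` map (emb i j) s]; first by split; [exact: finite_seq|].
rewrite -fsbig_seq ?map_inj_uniq //; last exact: emb_inj.
by rewrite big_map sumEFin.
Qed.

Definition TW (R : realType) i j (f : elt -> R[i]) : \bar R :=
  (\esum_(m in [set: word]) (cabs (Fw i j f m))%:E)%E.

Lemma TW_le (R : realType) i j (f : elt -> R[i]) : (TW i j f <= l1norm f)%E.
Proof.
apply: ge_ereal_sup => _ [X [finX _] <-].
rewrite fsbig_finite // sumEFin; apply: sum_le_l1; exact: fset_uniq.
Qed.

Lemma tail_small (R : realType) i j (f : elt -> R[i]) (eps : R) : inA f -> 0 < eps ->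
  exists N, forall s, uniq s -> (forall m, m \in s -> (N < size m)%N) ->
    \sum_(m <- s) cabs (Fw i j f m) <= eps.
Proof.
move=> fA e0.
have T0 : (0 <= TW i j f)%E by apply: esum_ge0 => m _; rewrite lee_fin cabs_ge0.
have Tfin : TW i j f \is a fin_num by rewrite ge0_fin_numE // (le_lt_trans (TW_le _ _ _)).
set r := fine (TW i j f).
have : ((r - eps)%:E < TW i j f)%E by rewrite -[X in (_ < X)%E](fineK Tfin) lte_fin -/r; lra.
move=> /ereal_sup_gt [_ [X [finX _] <-] HX].
rewrite fsbig_finite // sumEFin lte_fin in HX.
set A : seq word := fset_set X in HX.
exists (\max_(m <- A) size m)%N => s us sN.
have uA : uniq A by exact: fset_uniq.
have : ((\sum_(m <- s ++ A) cabs (Fw i j f m))%:E <= TW i j f)%E.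
  apply: esum_ge; exists [set` (s ++ A)]; first by split; [exact: finite_seq|].
  rewrite -fsbig_seq ?sumEFin //.
  rewrite cat_uniq us uA andbT /=; apply/hasP => -[m mA ms].
  have := sN m ms; have := @leq_bigmax_seq _ A xpredT (fun m : word => size m) m mA isT. move=> H1 H2; have := leq_ltn_trans H1 H2; by rewrite ltnn.
rewrite -(fineK Tfin) lee_fin big_cat /= -/r => H; lra.
Qed.

Definition Ew (R : realType) i j (f : elt -> R[i]) N m : R[i] :=
  if (size m < N)%N then 0 else if size m == N then cw i j f m else Fw i j f m.

Lemma sum_decode (R : realType) i j (f : elt -> R[i]) N (s : seq elt) :
  \sum_(t <- s) cabs (EN i j f N t) = \sum_(m <- pmap (decode i j) s) cabs (Ew i j f N m).
Proof.
elim: s => [|t s IH]; first by rewrite !big_nil.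
rewrite big_cons IH /EN /=; case: (decode i j t) => [m|].
  by rewrite /= big_cons.
by rewrite cabs0 add0r.
Qed.

Lemma decodeK i j : ocancel (decode i j) (emb i j).
Proof. by move=> u; case E: (decode i j u) => [m|] //=; rewrite (decode_Some E). Qed.

Lemma l1EN_bound (R : realType) i j (f : elt -> R[i]) N (eps B : R) :
  (forall s, uniq s -> (forall m, m \in s -> (N < size m)%N) ->
    \sum_(m <- s) cabs (Fw i j f m) <= eps) ->
  \sum_(m <- lev N) cabs (cw i j f m) <= B ->
  (l1norm (EN i j f N) <= (B + eps)%:E)%E.
Proof.
move=> Htail HB; apply: ge_ereal_sup => _ [X [finX _] <-].
rewrite fsbig_finite // sumEFin lee_fin sum_decode.
have us : uniq (pmap (decode i j) (fset_set X)).
  by apply: (pmap_uniq (@decodeK i j)); exact: fset_uniq.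
set s := pmap _ _ in us *.
apply: (@le_trans _ _ (\sum_(m <- s) ((if size m == N then cabs (cw i j f m) else 0)
     + (if (N < size m)%N then cabs (Fw i j f m) else 0)))).
  apply: ler_sum => m _; rewrite /Ew.
  case: (ltngtP (size m) N) => H.
  - by rewrite cabs0 addr0.
  - by rewrite add0r.
  - by rewrite addr0.
rewrite big_split -!big_mkcond -[X in X + _ <= _]big_filter -[X in _ + X <= _]big_filter; apply: lerD.
  apply: le_trans HB; apply: sum_sub_le; rewrite ?filter_uniq ?uniq_lev //.
    by move=> m; rewrite mem_filter mem_lev => /andP [].
  by move=> m; apply: cabs_ge0.
by apply: Htail; rewrite ?filter_uniq // => m; rewrite mem_filter => /andP [].
Qed.

Lemma ev_list (P : word -> nat -> Prop) (s : seq word) :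
  (forall m, exists L0, forall L, (L0 <= L)%N -> P m L) ->
  exists L0, forall L, (L0 <= L)%N -> forall m, m \in s -> P m L.
Proof.
move=> H; elim: s => [|a s [L1 HL1]]; first by exists 0%N.
have [L2 HL2] := H a; exists (maxn L1 L2) => L; rewrite geq_max => /andP [h1 h2] m.
by rewrite inE => /orP [/eqP ->|ms]; [exact: HL2|exact: HL1].
Qed.

Lemma ev_series (R : realType) i j (f : elt -> R[i]) (d : R) :
  zero_sums_at i j f -> 0 < d -> forall m, exists L0, forall L, (L0 <= L)%N ->
  cabs (series (fun l => Fw i j f (trunc (nth false m) l)) L) < d.
Proof.
move=> Hz d0 m; have := Hz (nth false m).
move/cvgr0_norm_lt => /(_ (d%:C)); rewrite ltcR => /(_ d0) [L0 _ HL0].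
exists L0 => L HL; have := HL0 L HL; rewrite normE ltcR //.
Qed.

Lemma cw_eq (R : realType) i j (f : elt -> R[i]) m L : (size m < L)%N ->
  cw i j f m = series (fun l => Fw i j f (trunc (nth false m) l)) L -
    \sum_((size m).+1 <= k < L) Fw i j f (m ++ nseq (k - size m) false).
Proof.
move=> HL; rewrite /series /= (big_cat_nat _ (n := (size m).+1)) //=.
rewrite [X in _ + X - _](eq_big_nat _ _ (F2 := fun k => Fw i j f (m ++ nseq (k - size m) false))); last first.
  by move=> k /andP [h _]; rewrite trunc_ge // ltnW.
rewrite addrK big_mkord /cw; apply: eq_bigr => k _; rewrite trunc_le //.
by have := ltn_ord k; rewrite ltnS.
Qed.

Lemma cw_bound (R : realType) i j (f : elt -> R[i]) N (eps : R) :
  zero_sums_at i j f -> 0 < eps ->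
  (forall s, uniq s -> (forall m, m \in s -> (N < size m)%N) ->
    \sum_(m <- s) cabs (Fw i j f m) <= eps) ->
  \sum_(m <- lev N) cabs (cw i j f m) <= eps + eps.
Proof.
move=> Hz e0 Htail.
set n0 := size (lev N).
set d := eps / (n0%:R + 1).
have n0ge : (0 : R) <= n0%:R by [].
have d0 : 0 < d by rewrite /d divr_gt0 // ltr_wpDl.
have dn : d * (n0%:R + 1) = eps by rewrite /d divfK // gt_eqF // ltr_wpDl.
have [L0 HL0] := ev_list (lev N) (ev_series Hz d0).
set L := maxn L0 N.+1.
have HL1 : (L0 <= L)%N by rewrite leq_maxl.
have HL2 : (N < L)%N by rewrite leq_maxr.
have Hm : forall m, m \in lev N -> cabs (cw i j f m) <=
    d + \sum_(N.+1 <= k < L) cabs (Fw i j f (m ++ nseq (k - N) false)).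
  move=> m mN; have sm : size m = N by apply/eqP; rewrite -mem_lev.
  rewrite (cw_eq _ _ _ (L := L)) ?sm //.
  apply: le_trans (cabs_le3 (ler_normB _ _)) _.
  apply: lerD; first by apply: ltW; apply: HL0.
  exact: cabs_sum.
rewrite big_seq; apply: le_trans (ler_sum _ Hm) _.
rewrite -big_seq big_split /=.
rewrite -(big_allpairs_dep (h := fun m k => m ++ nseq (k - N) false) (F := fun w => cabs (Fw i j f w))).
apply: lerD.
  have -> : \sum_(i0 <- lev N) d = d *+ n0.
    rewrite /n0; elim: (lev N) => [|a s IH]; first by rewrite big_nil.
    by rewrite big_cons IH /= mulrS.
  rewrite -mulr_natr; nra.
apply: Htail.
  apply: allpairs_uniq; rewrite ?uniq_lev ?iota_uniq //.
  move=> [m1 k1] [m2 k2] /allpairsP [[a1 b1] /= [a1N b1I [-> ->]]].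
  move=> /allpairsP [[a2 b2] /= [a2N b2I [-> ->]]] /= E.
  move: a1N a2N; rewrite !mem_lev => /eqP s1 /eqP s2.
  move: E => /eqP; rewrite eqseq_cat ?s1 ?s2 // => /andP [/eqP -> /eqP E].
  have := congr1 size E; rewrite !size_nseq.
  move: b1I b2I; rewrite !mem_index_iota => /andP [h1 _] /andP [h2 _] h.
  by congr (_, _); lia.
move=> w /allpairsP [[a b] /= [aN bI ->]].
move: aN bI; rewrite mem_lev mem_index_iota => /eqP sa /andP [h _].
rewrite size_cat size_nseq sa; lia.
Qed.

Lemma inA_restrict (R : realType) i j (f : elt -> R[i]) : inA f -> inA (restrict_Sv i j f).
Proof.
rewrite /inA => fA; apply: le_lt_trans fA; apply: le_esum => u _.
rewrite lee_fin restrict_dec; case E: (decode i j u) => [m|].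
  by rewrite /Fw -(decode_Some E).
by rewrite cabs0 cabs_ge0.
Qed.

Theorem proposition3p11 (R : realType) (i j : word) (f : elt -> R[i]) :
  inA f -> zero_sums_at i j f -> J (restrict_Sv i j f).
Proof.
move=> fA Hz I HI If0.
have [_ _ _ Icl] := HI.
apply: Icl; first exact: inA_restrict.
move=> e e0.
have e4 : 0 < e / 4 by rewrite divr_gt0.
have [N Htl] := tail_small i j fA e4.
exists (HN i j f N); first exact: claimB.
rewrite (_ : (fun t => restrict_Sv i j f t - HN i j f N t) = EN i j f N); last first.
  by apply/funext => u; rewrite claimA.
apply: le_lt_trans (l1EN_bound Htl (cw_bound Hz e4 Htl)) _.
rewrite lte_fin; lra.
Qed.
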